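(* Fix parameters $T$ and $K$ with $T>K$, and let $\mathrm{INST}$ be a streaming multi-armed bandit instance with $K$ arms. Let $\mathrm{ALG}$ be a single-pass streaming algorithm that, given a parameter $\varepsilon$, uses memory $S$ and $\frac{M}{\varepsilon^2}$ arm pulls and returns an arm $\mathsf{arm}_{\mathrm{ALG}(\mathrm{INST})}$ with mean reward $\mu_{\mathrm{ALG}(\mathrm{INST})}$ such that \[\Pr\left(\mu_{\mathrm{ALG}(\mathrm{INST})}<\mu^*-c\cdot\varepsilon\right)\leq \left(\tfrac{1}{2}\right)^{c}\cdot\frac{1}{10}\] for every integer $c\geq 1$. Then there exists a streaming algorithm with memory $S$ that performs $T$ arm pulls with expected regret \[\mathbb{E}[R_T]\leq O\left(M\cdot\frac{T^{2/3}}{K^{2/3}}+K^{1/3}T^{2/3}\right).\]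
   Context: Single-pass streaming multi-armed bandits: there are $K$ arms, each with an unknown reward distribution (supported on $[0,1]$) with mean $\mu_i$; $\mu^*=\max_i\mu_i$. The arms arrive one by one in a stream in an arbitrary order. The algorithm may only pull arms currently stored in its memory (including the arm currently being read); once an arm is not stored or is discarded, it can never be retrieved. Memory $S$ means at most $S$ arms are stored at any time. The algorithm performs $T$ arm pulls in total; if $a_1,\dots,a_T$ are the arms pulled, the regret is $R_T=T\mu^*-\sum_{s=1}^T\mu_{a_s}$ and $\mathbb{E}[R_T]$ is its expectation. The $O(\cdot)$ hides an absolute constant. *)

(* Defs.v *)
From HB Require Import structures.
From mathcomp Require Import all_boot all_order all_algebra.
From mathcomp Require Import all_classical all_reals all_analysis.
Set Implicit Arguments. Unset Strict Implicit. Unset Printing Implicit Defensive.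
Import Order.TTheory GRing.Theory Num.Theory.
Local Open Scope classical_set_scope.
Local Open Scope ring_scope.

(* Arms are identified by their arrival position 0, 1, ..., K-1 in the *)
(* stream (an arbitrary order = an arbitrary tuple of distributions).  *)

Inductive action :=
  | APull of nat
  | ADiscard of nat
  | ARead             (* read the next arm of the stream into memory *)
  | AStop of nat.

(* A (randomized) algorithm: given its random seed u and the history of
   its actions (with the observed reward for pulls, 0 otherwise), it
   chooses the next action. *)
Definition policy (R : realType) := R -> seq (action * R) -> action.

Record state (R : realType) := State {
  st_mem : seq nat;              (* arms currently stored (incl. the one being read) *)
  st_pos : nat;
  st_cnt : nat -> nat;
  st_hist : seq (action * R) }.

Inductive outcome (R : realType) :=
  | Done of nat & seq (action * R)
  | Fail                            (* illegal action *)
  | OutOfFuel.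

Definition init_state (R : realType) : state R := State [::] 0 (fun _ => 0%N) [::].

(* Execution with [n] steps of fuel; [x i j] is the reward obtained at the
   j-th pull (counting from 0) of arm i. Memory S: at most S arms stored
   at any time, the arm being read included. *)
Fixpoint exec (R : realType) (K S : nat) (pol : policy R) (u : R)
    (x : nat -> nat -> R) (n : nat) (st : state R) : outcome R :=
  match n with
  | 0 => OutOfFuel R
  | n'.+1 =>
    match pol u (st_hist st) with
    | APull a =>
        if a \in st_mem st then
          exec K S pol u x n'
            (State (st_mem st) (st_pos st)
               (fun b => if b == a then (st_cnt st a).+1 else st_cnt st b)
               (rcons (st_hist st) (APull a, x a (st_cnt st a))))
        else Fail R
    | ADiscard a =>
        if a \in st_mem st then
          exec K S pol u x n'
            (State (rem a (st_mem st)) (st_pos st) (st_cnt st)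
               (rcons (st_hist st) (ADiscard a, 0)))
        else Fail R
    | ARead =>
        if (st_pos st < K)%N && (size (st_mem st) < S)%N then
          exec K S pol u x n'
            (State (rcons (st_mem st) (st_pos st)) (st_pos st).+1 (st_cnt st)
               (rcons (st_hist st) (ARead, 0)))
        else Fail R
    | AStop a => if a \in st_mem st then Done a (st_hist st) else Fail R
    end
  end.

Definition result (R : realType) (K S : nat) (pol : policy R) (u : R)
    (x : nat -> nat -> R) : outcome R :=
  match pselect (exists n a h, exec K S pol u x n (init_state R) = Done a h) with
  | left e => exec K S pol u x (proj1_sig (cid e)) (init_state R)
  | right _ => Fail R
  end.

Definition pulls (R : realType) (h : seq (action * R)) : seq nat :=
  pmap (fun p => if p.1 is APull a then Some a else None) h.

Definition valid_alg (R : realType) (K S : nat) (pol : policy R)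
    (okpulls : nat -> Prop) : Prop :=
  forall (u : R) (x : nat -> nat -> R), 0 <= u <= 1 ->
    (forall i j, 0 <= x i j <= 1) ->
    exists a h, result K S pol u x = Done a h /\ okpulls (size (pulls h)).

Definition mean (R : realType) (D : probability R R) : R :=
  fine (\int[D]_x (x%:E))%E.

Definition mustar (R : realType) (K : nat) (D : nat -> probability R R) : R :=
  \big[Num.max/0]_(i < K) mean (D i).

(* A probabilistic realization of the instance (D_0, ..., D_{K-1}) on a
   probability space: X i j = reward of the j-th pull of arm i, U = random
   seed of the algorithm. All X i j (i < K) and U are mutually independent,
   X i j has law D i, and U is uniform on [0,1]. *)
Definition bandit_model (R : realType) (d : measure_display)
    (Omega : measurableType d) (P : probability Omega R) (K : nat)
    (D : nat -> probability R R) (X : nat -> nat -> Omega -> R)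
    (U : Omega -> R) : Prop :=
  [/\ (forall i j, measurable_fun setT (X i j)),
      measurable_fun setT U,
      (forall i j w, 0 <= X i j w <= 1),
      (forall w, 0 <= U w <= 1)
    & forall (F : seq (nat * nat)) (B : nat * nat -> set R) (A : set R),
        uniq F -> all (fun p => (p.1 < K)%N) F ->
        measurable A -> (forall p, measurable (B p)) ->
        P (U @^-1` A `&` \bigcap_(p in [set q | q \in F]) (X p.1 p.2 @^-1` B p))
        = (lebesgue_measure (A `&` `[0%R, 1%R]) *
           \prod_(p <- F) D p.1 (B p))%E ].

Definition run_at (R : realType) (d : measure_display) (Omega : measurableType d)
    (K S : nat) (pol : policy R) (X : nat -> nat -> Omega -> R)
    (U : Omega -> R) (w : Omega) : outcome R :=
  result K S pol (U w) (fun i j => X i j w).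

Definition alg_measurable (R : realType) (d : measure_display)
    (Omega : measurableType d) (K S : nat) (pol : policy R)
    (X : nat -> nat -> Omega -> R) (U : Omega -> R) : Prop :=
  forall (a : nat) (s : seq nat),
    measurable [set w | exists h, run_at K S pol X U w = Done a h /\ pulls h = s].

Definition pe_guarantee (R : realType) (K S : nat) (M eps : R) (pol : policy R)
    : Prop :=
  valid_alg K S pol (fun n => n%:R <= M / eps ^+ 2) /\
  forall (d : measure_display) (Omega : measurableType d)
    (P : probability Omega R) (D : nat -> probability R R)
    (X : nat -> nat -> Omega -> R) (U : Omega -> R),
    bandit_model P K D X U ->
    alg_measurable K S pol X U /\
    forall c : nat, (1 <= c)%N ->
      (P [set w | exists a h, run_at K S pol X U w = Done a h /\
                    (mean (D a) < mustar K D - c%:R * eps)%R]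
       <= ((1 / 2) ^+ c / 10)%:E)%E.

Definition regret_at (R : realType) (d : measure_display) (Omega : measurableType d)
    (K S T : nat) (pol : policy R) (D : nat -> probability R R)
    (X : nat -> nat -> Omega -> R) (U : Omega -> R) (w : Omega) : R :=
  match run_at K S pol X U w with
  | Done _ h => T%:R * mustar K D - \sum_(a <- pulls h) mean (D a)
  | _ => 0
  end.

Definition regret_guarantee (R : realType) (K S T : nat) (B : R) (pol : policy R)
    : Prop :=
  valid_alg K S pol (fun n => n = T) /\
  forall (d : measure_display) (Omega : measurableType d)
    (P : probability Omega R) (D : nat -> probability R R)
    (X : nat -> nat -> Omega -> R) (U : Omega -> R),
    bandit_model P K D X U ->
    alg_measurable K S pol X U /\
    (\int[P]_w (regret_at K S T pol D X U w)%:E <= B%:E)%E.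

(* Main.v *)
Require Import Defs.
From HB Require Import structures.
From mathcomp Require Import all_boot all_order all_algebra.
From mathcomp Require Import all_classical all_reals all_analysis.
From mathcomp Require Import measurable_realfun.
From mathcomp Require Import ring lra.
Import Order.TTheory GRing.Theory Num.Theory.
Set Implicit Arguments. Unset Strict Implicit. Unset Printing Implicit Defensive.

Local Open Scope ring_scope.

Section Comb.
Variable R : realType.
Variables (K S : nat).
Implicit Types (pol : policy R) (u : R) (x : nat -> nat -> R).

Lemma exec_mono pol u x n st a h : exec K S pol u x n st = Done a h ->
  forall m, (n <= m)%N -> exec K S pol u x m st = Done a h.
Proof.
elim: n st => [|n IH] st //= E [|m] //= lt.
case: (pol u (st_hist st)) E => [b|b||b].
- by case: ifP => // _ /IH ->.
- by case: ifP => // _ /IH ->.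
- by case: ifP => // _ /IH ->.
- by [].
Qed.

Lemma exec_det pol u x n m st a h a' h' :
  exec K S pol u x n st = Done a h -> exec K S pol u x m st = Done a' h' ->
  a = a' /\ h = h'.
Proof.
move=> E1 E2.
have := exec_mono E1 (leq_maxl n m); have := exec_mono E2 (leq_maxr n m).
by move=> -> [-> ->].
Qed.

Lemma result_Done pol u x n a h :
  exec K S pol u x n (init_state R) = Done a h -> result K S pol u x = Done a h.
Proof.
move=> E; rewrite /result; case: pselect => [e|[]]; last by exists n, a, h.
case: (cid e) => n' /= [a' [h' E']]; rewrite E'.
by have [-> ->] := exec_det E E'.
Qed.

Lemma result_exec pol u x a h :
  result K S pol u x = Done a h -> exists n, exec K S pol u x n (init_state R) = Done a h.
Proof.
rewrite /result; case: pselect => [e|//] E.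
by exists (proj1_sig (cid e)).
Qed.

End Comb.

Local Open Scope ring_scope.

Definition stopA (c : action) : option nat := if c is AStop a then Some a else None.

Fixpoint sp (f : nat -> option nat) (k n : nat) : option nat :=
  match n with 0 => None | n'.+1 => if f k is Some a then Some a else sp f k.+1 n' end.

Lemma sp_skip f d i r : (forall l, (i <= l < i + d)%N -> f l = None) ->
  sp f i (d + r) = sp f (i + d) r.
Proof.
elim: d i => [|d IH] i H; first by rewrite addn0.
change (sp f i (d + r).+1 = sp f (i + d.+1) r).
rewrite /= H; last by rewrite leqnn /= addnS ltnS leq_addr.
rewrite IH ?addnS ?addSn // => l /andP[il li]; apply: H.
by rewrite (ltnW il) /= addnS -addSn.
Qed.

Definition stop_point (R : realType) (pol : policy R) u (h : seq (action * R)) :=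
  sp (fun k => stopA (pol u (take k h))) 0 (size h).+1.

Definition sim (R : realType) (pol : policy R) (T : nat) : policy R :=
  fun u h => match stop_point pol u h with
             | Some a => if (size (pulls h) < T)%N then APull a else AStop a
             | None => pol u h end.

Definition nostop (R : realType) (pol : policy R) u (h : seq (action * R)) :=
  forall l, (l < size h)%N -> stopA (pol u (take l h)) = None.

Section Sim.
Variable R : realType.
Variables (K S T : nat).
Implicit Types (pol : policy R) (u : R) (x : nat -> nat -> R).

Lemma stop_point_cat pol u (h e : seq (action * R)) :
  nostop pol u h -> (e = [::] \/ exists a, pol u h = AStop a) ->
  stop_point pol u (h ++ e) = stopA (pol u h).
Proof.
move=> ns He; rewrite /stop_point size_cat -addnS sp_skip /=.
  rewrite add0n take_cat ltnn subnn take0 cats0.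
  by case: He => [-> | [a ->]] //=; case: (stopA _).
move=> l; rewrite add0n => ll; rewrite take_cat ll; exact: ns.
Qed.

Lemma sim_nostop pol u h : nostop pol u h -> stopA (pol u h) = None ->
  sim pol T u h = pol u h.
Proof.
move=> ns sn; rewrite /sim -[h]cats0 stop_point_cat //; [by rewrite cats0 sn|by left].
Qed.

Lemma nostop_rcons pol u h p : nostop pol u h -> stopA (pol u h) = None ->
  nostop pol u (rcons h p).
Proof.
move=> ns sn l; rewrite size_rcons ltnS leq_eqVlt => /orP[/eqP->|ll].
  by rewrite -cats1 take_cat ltnn subnn take0 cats0.
by rewrite -cats1 take_cat ll; apply: ns.
Qed.

Lemma pulls_rcons (h : seq (action * R)) p :
  pulls (rcons h p) = pulls h ++ (if p.1 is APull a then [:: a] else [::]).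
Proof. by rewrite /pulls -cats1 pmap_cat /=; case: p => [[]]. Qed.

Lemma phase1 pol u x n st a hf :
  nostop pol u (st_hist st) -> exec K S pol u x n st = Done a hf ->
  exists k st', (forall m, exec K S (sim pol T) u x (k + m) st = exec K S (sim pol T) u x m st')
    /\ st_hist st' = hf /\ nostop pol u hf /\ pol u hf = AStop a /\ a \in st_mem st'.
Proof.
elim: n st => [|n IH] st ns //=.
case E: (pol u (st_hist st)) => [b|b||b].
- case: ifP => // bm /IH []; first by apply: nostop_rcons; rewrite ?E.
  move=> k [st' [H1 H2]]; exists k.+1, st'; split=> // m.
  by rewrite addSn /= sim_nostop ?E // bm H1.
- case: ifP => // bm /IH []; first by apply: nostop_rcons; rewrite ?E.
  move=> k [st' [H1 H2]]; exists k.+1, st'; split=> // m.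
  by rewrite addSn /= sim_nostop ?E // bm H1.
- case: ifP => // bm /IH []; first by apply: nostop_rcons; rewrite ?E.
  move=> k [st' [H1 H2]]; exists k.+1, st'; split=> // m.
  by rewrite addSn /= sim_nostop ?E // bm H1.
- case: ifP => // bm [<- <-]; exists 0%N, st; split=> //.
Qed.

Lemma exec_pull pol u x n st b : pol u (st_hist st) = APull b -> b \in st_mem st ->
  exec K S pol u x n.+1 st = exec K S pol u x n
            (State (st_mem st) (st_pos st)
               (fun c => if c == b then (st_cnt st b).+1 else st_cnt st c)
               (rcons (st_hist st) (APull b, x b (st_cnt st b)))).
Proof. by move=> /= -> ->. Qed.

Lemma exec_stop pol u x n st b : pol u (st_hist st) = AStop b -> b \in st_mem st ->
  exec K S pol u x n.+1 st = Done b (st_hist st).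
Proof. by move=> /= -> ->. Qed.

Lemma phase2 pol u x hf a j : nostop pol u hf -> pol u hf = AStop a ->
  forall st e, st_hist st = hf ++ e -> a \in st_mem st ->
  (j + size (pulls (st_hist st)))%N = T ->
  exists h', exec K S (sim pol T) u x j.+1 st = Done a h' /\
    pulls h' = pulls (st_hist st) ++ nseq j a.
Proof.
move=> ns pa; elim: j => [|j IH] st e he am hT.
- rewrite (@exec_stop _ _ _ _ _ a) //; first by exists (st_hist st); rewrite cats0.
  rewrite /sim he stop_point_cat //; last (by right; exists a).
  by rewrite pa /= -he -hT add0n ltnn.
- rewrite (@exec_pull _ _ _ _ _ a) //; last first.
    rewrite /sim he stop_point_cat //; last (by right; exists a).
    by rewrite pa /= -he -hT addSn ltnS leq_addl.
  have [] := IH (State (st_mem st) (st_pos st)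
               (fun c => if c == a then (st_cnt st a).+1 else st_cnt st c)
               (rcons (st_hist st) (APull a, x a (st_cnt st a)))) (rcons e (APull a, x a (st_cnt st a))) => //=.
  + by rewrite he rcons_cat.
  + by rewrite pulls_rcons /= size_cat /= addn1 addnS.
  move=> h' [E P]; exists h'; split=> //.
  by rewrite P pulls_rcons /= -catA.
Qed.

Lemma sim_run pol u x a hf : result K S pol u x = Done a hf ->
  (size (pulls hf) <= T)%N ->
  result K S (sim pol T) u x = Done a hf ->
  True.
Proof. by []. Qed.

Lemma sim_result pol u x a hf : result K S pol u x = Done a hf ->
  (size (pulls hf) <= T)%N ->
  exists h', result K S (sim pol T) u x = Done a h' /\
    pulls h' = pulls hf ++ nseq (T - size (pulls hf)) a.
Proof.
move=> /result_exec [n E] hT.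
have [] := phase1 (st := init_state R) _ E; first by move=> l.
move=> k [st' [H1 [H2 [H3 [H4 H5]]]]].
have [] := phase2 (j := (T - size (pulls hf))%N) x H3 H4 (e := [::]) (st := st').
- by rewrite cats0.
- by [].
- by rewrite H2 subnK.
move=> h' [E' P]; exists h'; split; last by rewrite P H2.
by apply: (@result_Done _ _ _ _ _ _ (k + (T - size (pulls hf)).+1)); rewrite H1 E'.
Qed.

End Sim.

Local Open Scope ring_scope.

Section Inv.
Variable R : realType.
Variables (K S : nat).
Implicit Types (pol : policy R) (u : R) (x : nat -> nat -> R).

Lemma exec_inv pol u x n st a h : exec K S pol u x n st = Done a h ->
  all (fun b => b < K)%N (st_mem st) -> (size (st_mem st) <= S)%N ->
  all (fun b => b < K)%N (pulls (st_hist st)) ->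
  [/\ (a < K)%N, (0 < S)%N & all (fun b => b < K)%N (pulls h)].
Proof.
elim: n st => [|n IH] st //=.
case E: (pol u (st_hist st)) => [b|b||b].
- case: ifP => // bm /IH H m1 m2 m3; apply: H => //=.
  rewrite pulls_rcons all_cat m3 /= andbT; exact: (allP m1).
- case: ifP => // bm /IH H m1 m2 m3; apply: H => //=.
  + by apply/allP => c /mem_rem; apply: (allP m1).
  + by rewrite size_rem // (leq_trans _ m2) // leq_pred.
  + by rewrite pulls_rcons cats0.
- case: ifP => // /andP[p1 p2] /IH H m1 m2 m3; apply: H => //=.
  + by rewrite -cats1 all_cat m1 /= p1.
  + by rewrite size_rcons.
  + by rewrite pulls_rcons cats0.
- case: ifP => // bm [<- <-] m1 m2 m3; split=> //; first exact: (allP m1).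
  by case: (st_mem st) bm m2 => // ? ? _; apply: leq_trans.
Qed.

Lemma result_inv pol u x a h : result K S pol u x = Done a h ->
  [/\ (a < K)%N, (0 < S)%N & all (fun b => b < K)%N (pulls h)].
Proof. by move=> /result_exec [n /exec_inv]; apply. Qed.

End Inv.

Local Open Scope classical_set_scope.
Local Open Scope ring_scope.

Section Meas.
Variables (R : realType) (d : measure_display) (Omega : measurableType d)
  (P : probability Omega R) (K S T : nat) (D : nat -> probability R R)
  (X : nat -> nat -> Omega -> R) (U : Omega -> R).
Hypothesis model : bandit_model P K D X U.

Definition Fval (pol : policy R) (phi : nat -> seq nat -> R) (w : Omega) : R :=
  match run_at K S pol X U w with Done a h => phi a (pulls h) | _ => 0 end.

Lemma model_valid w : 0 <= U w <= 1 /\ forall i j, 0 <= X i j w <= 1.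
Proof. by case: model => _ _ HX HU _; split. Qed.

Lemma always_done pol ok : valid_alg K S pol ok -> forall w,
  exists a h, run_at K S pol X U w = Done a h /\ ok (size (pulls h)).
Proof.
move=> V w; have [H1 H2] := model_valid w.
by have [a [h [E O]]] := V (U w) (fun i j => X i j w) H1 H2; exists a, h.
Qed.

Lemma meas_F pol ok phi : valid_alg K S pol ok -> alg_measurable K S pol X U ->
  measurable_fun setT (Fval pol phi).
Proof.
move=> V AM _ B mB.
pose F (p : nat * seq nat) : set Omega :=
  if asbool (B (phi p.1 p.2)) then
     [set w | exists h, run_at K S pol X U w = Done p.1 h /\ pulls h = p.2]
  else set0.
have -> : setT `&` Fval pol phi @^-1` B = \bigcup_p F p.
  apply/seteqP; split => w.
  - move=> [_ HB]; have [a [h [E _]]] := always_done V w.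
    exists (a, pulls h) => //; rewrite /F /=.
    move: HB; rewrite /preimage /= /Fval E => HB.
    by rewrite asboolT //; exists h.
  - move=> [[a s] _]; rewrite /F /=; case: asboolP => // HB [h [E Ps]].
    by split => //; rewrite /preimage /= /Fval E Ps.
apply: countable_bigcupT_measurable; first exact: countableP.
move=> [a s]; rewrite /F /=; case: asboolP => _ //; exact: AM.
Qed.

Lemma sim_measurable pol ok : valid_alg K S pol ok -> alg_measurable K S pol X U ->
  (forall n, ok n -> n <= T)%N ->
  alg_measurable K S (sim pol T) X U.
Proof.
move=> V AM okT a s.
pose F (s0 : seq nat) : set Omega :=
  if s0 ++ nseq (T - size s0) a == s then
     [set w | exists h, run_at K S pol X U w = Done a h /\ pulls h = s0]
  else set0.
have -> : [set w | exists h, run_at K S (sim pol T) X U w = Done a h /\ pulls h = s]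
   = \bigcup_s0 F s0.
  apply/seteqP; split => w.
  - move=> [h [E Ps]]; have [a' [h' [E' O]]] := always_done V w.
    have [h'' [E'' P'']] := sim_result E' (okT _ O).
    move: E; rewrite /run_at E'' => -[Ea Eh]; subst a' h''.
    exists (pulls h') => //; rewrite /F -Ps P'' eqxx; by exists h'.
  - move=> [s0 _]; rewrite /F; case: eqP => // <- [h [E Ps]].
    have [a' [h' [E' O]]] := always_done V w.
    have Oh : ok (size (pulls h)) by move: E; rewrite E' => -[_ <-].
    have [h'' [E'' P'']] := sim_result E (okT _ Oh).
    by exists h''; rewrite /run_at E'' P'' Ps.
apply: countable_bigcupT_measurable; first exact: countableP.
move=> s0; rewrite /F; case: eqP => _ //; exact: AM.
Qed.

End Meas.

Local Open Scope classical_set_scope.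
Local Open Scope ring_scope.

Lemma mean01 (R : realType) (Q : probability R R) :
  Q [set` `[0%R, 1%R]] = 1%E -> 0 <= mean Q <= 1.
Proof.
move=> Q1.
pose f := fun x : R => \1_([set` `[0%R, 1%R]] : set R) x * x.
have mI : measurable ([set` `[0%R, 1%R]] : set R) by [].
have mf : measurable_fun setT f.
  by apply: measurable_funM; [exact: measurable_indic|exact: measurable_id].
have E : (\int[Q]_x (x%:E) = \int[Q]_x (f x)%:E)%E.
  apply: ae_eq_integral => //.
  - by apply/measurable_EFinP.
  - rewrite /ae_eq /prop_near1 /almost_everywhere; exists (~` ([set` `[0%R, 1%R]] : set R)); split.
    + exact: measurableC.
    + by have := probability_setC Q mI; rewrite Q1 subee.
    + move=> x /= Hx xI; apply: Hx => _; rewrite /f indicE mem_set ?mul1r //.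
have f0 : forall x, 0 <= f x.
  move=> x; rewrite /f indicE; case: (boolP (x \in _)); last by rewrite mul0r.
  by rewrite inE /= in_itv /= mul1r => /andP[].
have f1 : forall x, f x <= 1.
  move=> x; rewrite /f indicE; case: (boolP (x \in _)); last by rewrite mul0r.
  by rewrite inE /= in_itv /= mul1r => /andP[].
have I0 : (0 <= \int[Q]_x (f x)%:E)%E by apply: integral_ge0 => x _; rewrite lee_fin.
have I1 : (\int[Q]_x (f x)%:E <= 1)%E.
  have : (\int[Q]_x (f x)%:E <= \int[Q]_x (cst 1%E x))%E.
    apply: ge0_le_integral => //; try (by move=> x _; rewrite lee_fin);
      try (by apply/measurable_EFinP).
  move=> H; apply: le_trans H _; rewrite integral_cst // mul1e; exact: probability_le1.
rewrite /mean E; move: I0 I1; case: (\int[Q]_x _)%E => //= r.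
by rewrite !lee_fin => -> ->.
Qed.

Local Open Scope classical_set_scope.
Local Open Scope ring_scope.

Section Means.
Variables (R : realType) (d : measure_display) (Omega : measurableType d)
  (P : probability Omega R) (K : nat) (D : nat -> probability R R)
  (X : nat -> nat -> Omega -> R) (U : Omega -> R).
Hypothesis model : bandit_model P K D X U.

Lemma model_D01 b : (b < K)%N -> D b [set` `[0%R, 1%R]] = 1%E.
Proof.
move=> bK; case: model => _ _ HX _ H.
have := H [:: (b, 0%N)] (fun _ => [set` `[0%R, 1%R]]) setT erefl.
rewrite /= bK => /(_ erefl measurableT (fun _ => measurable_itv _)).
have -> : U @^-1` setT `&` \bigcap_(p in [set q | q \in [:: (b, 0%N)]])
             X p.1 p.2 @^-1` [set` `[0%R, 1%R]] = setT.
  apply/seteqP; split => // w _; split => // p _ /=.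
  by rewrite in_itv /=; exact: HX.
rewrite setTI lebesgue_measure_itv /= lte_fin ltr01 big_cons big_nil mule1 oppr0 adde0.
have -> : P setT = 1%E by exact: probability_setT.
by rewrite mul1e.
Qed.

Lemma model_mean01 b : (b < K)%N -> 0 <= mean (D b) <= 1.
Proof. by move=> bK; apply: mean01; exact: model_D01. Qed.

Lemma le_mean_mustar b : (b < K)%N -> mean (D b) <= mustar K D.
Proof.
move=> bK; rewrite /mustar.
exact: (le_bigmax _ (fun i : 'I_K => mean (D i)) (Ordinal bK)).
Qed.

Lemma mustar_le1 : mustar K D <= 1.
Proof.
rewrite /mustar; apply: bigmax_le => // i _.
by have /andP[] := model_mean01 (ltn_ord i).
Qed.

End Means.

Local Open Scope ring_scope.

Section Real.
Variable R : realType.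

Lemma sum_sub_const (I : Type) (s : seq I) (c : R) (f : I -> R) :
  \sum_(b <- s) (c - f b) = c *+ size s - \sum_(b <- s) f b.
Proof.
elim: s => [|b s IH]; first by rewrite !big_nil mulr0n subr0.
rewrite !big_cons IH /= mulrS; ring.
Qed.

Lemma gap_bound (gv eps : R) N : 0 < eps ->
  Num.min gv ((N.+1)%:R * eps) <= eps * (1 + \sum_(c < N) (((c.+1)%:R * eps < gv)%R : bool)%:R).
Proof.
move=> e0; elim: N => [|N IH].
  by rewrite big_ord0 addr0 mulr1 mul1r ge_min lexx orbT.
rewrite big_ord_recr /=.
have [Hlt|Hle] := ltP ((N.+1)%:R * eps) gv.
- rewrite min_r in IH; last exact: ltW Hlt.
  rewrite ge_min; apply/orP; right.
  have -> : (N.+2)%:R * eps = (N.+1)%:R * eps + eps by rewrite -[N.+2]addn1 natrD; ring.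
  move: IH; set s := \sum_(_ < _) _ => IH.
  rewrite mulr1n; lra.
- have e1 : Num.min gv ((N.+2)%:R * eps) = Num.min gv ((N.+1)%:R * eps).
    rewrite !min_l //; apply: (le_trans Hle).
    by rewrite ler_pM2r // ler_nat.
  rewrite e1 (le_trans IH) // mulr0n addr0 //.
Qed.

Lemma geom_sum N : \sum_(c < N) (1 / 2 : R) ^+ c.+1 = 1 - (1 / 2) ^+ N.
Proof.
elim: N => [|N IH]; first by rewrite big_ord0 expr0 subrr.
rewrite big_ord_recr /= IH !exprS; field; by [].
Qed.

Lemma geom_le N : \sum_(c < N) ((1 / 2 : R) ^+ c.+1 / 10) <= 1 / 10.
Proof.
rewrite -mulr_suml geom_sum ler_pM2r // gerBl; exact: exprn_ge0.
Qed.

End Real.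

Local Open Scope classical_set_scope.
Local Open Scope ring_scope.

Lemma iter_add (R : realType) (x : R) n : iter n (+%R x) 0 = x *+ n.
Proof. by elim: n => [|n IH] //=; rewrite IH mulrS. Qed.

Section Main.
Variables (R : realType) (d : measure_display) (Omega : measurableType d)
  (P : probability Omega R) (K S T : nat) (D : nat -> probability R R)
  (X : nat -> nat -> Omega -> R) (U : Omega -> R).
Hypothesis model : bandit_model P K D X U.
Variables (pol : policy R) (L : R).
Hypothesis V : valid_alg K S pol (fun n => n%:R <= L).
Hypothesis LT : L <= T%:R.
Hypothesis AM : alg_measurable K S pol X U.

Lemma okT n : n%:R <= L -> (n <= T)%N.
Proof. by move=> H; rewrite -(ler_nat R); apply: le_trans LT. Qed.

Lemma L0 : 0 <= L.
Proof.
have h01 : 0 <= (0 : R) <= 1 by rewrite lexx ler01.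
have [a [h [_ H]]] := V (u := 0) (x := fun _ _ => 0) h01 (fun _ _ => h01).
exact: le_trans H.
Qed.

Definition gapf (a : nat) (s : seq nat) := mustar K D - mean (D a).
Definition phif (a : nat) (s : seq nat) :=
  T%:R * mustar K D - \sum_(b <- s ++ nseq (T - size s) a) mean (D b).

Let g := Fval K S X U pol gapf.
Let regret := regret_at K S T (sim pol T) D X U.

Lemma regret_eq : regret =1 Fval K S X U pol phif.
Proof.
move=> w; rewrite /regret /regret_at /Fval.
have [a [hf [E O]]] := always_done model V w.
have [h' [E' P']] := sim_result E (okT O).
by rewrite E /run_at E' P'.
Qed.

Lemma sum_gap_bnd (s : seq nat) : all (fun b => b < K)%N s ->
  0 <= \sum_(b <- s) (mustar K D - mean (D b)) <= (size s)%:R.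
Proof.
elim: s => [|b s IH] /=; first by rewrite big_nil lexx.
move=> /andP[bK /IH /andP[H1 H2]]; rewrite big_cons.
have := le_mean_mustar D bK; have := mustar_le1 model.
have /andP[m0 m1] := model_mean01 model bK.
rewrite -addn1 natrD; lra.
Qed.

Lemma gap_bnd w : 0 <= g w <= 1.
Proof.
rewrite /g /Fval /gapf; have [a [hf [E O]]] := always_done model V w.
rewrite E; have [aK _ _] := result_inv E.
have := le_mean_mustar D aK; have := mustar_le1 model.
have /andP[m0 m1] := model_mean01 model aK; lra.
Qed.

Lemma regret_bnd w : 0 <= regret w <= L + T%:R * g w.
Proof.
rewrite regret_eq /g /Fval /phif /gapf; have [a [hf [E O]]] := always_done model V w.
rewrite E; have [aK _ allK] := result_inv E.
have nT := okT O.
set s := pulls hf in O nT allK *.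
rewrite big_cat big_nseq iter_add.
have := sum_gap_bnd allK; rewrite sum_sub_const => /andP[H1 H2].
have := le_mean_mustar D aK; have := mustar_le1 model.
have /andP[m0 m1] := model_mean01 model aK.
have HT : T%:R = (size s)%:R + (T - size s)%:R :> R by rewrite -natrD subnKC.
set n := size s in HT H1 H2 O *; set m := (T - n)%N in HT *.
set mu := mustar K D in H1 H2 *; set Sm := \sum_(_ <- _) _ in H1 H2 *.
set ma := mean (D a) => mu1 mam.
have -> : Algebra.Algebra_add__canonical__Monoid_Law R Sm (ma *+ m) = Sm + ma *+ m by [].
have key : T%:R * mu - (Sm + ma *+ m) = (mu *+ n - Sm) + m%:R * (mu - ma).
  rewrite -[mu *+ n]mulr_natr -[ma *+ m]mulr_natr; move: HT; generalize (T%:R : R) (n%:R : R) (m%:R : R).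
  by move=> t nn mm ->; ring.
have B1 : m%:R * (mu - ma) <= T%:R * (mu - ma).
  by apply: ler_wpM2r; [lra | rewrite ler_nat leq_subr].
have B0 : 0 <= m%:R * (mu - ma) by apply: mulr_ge0; [rewrite ler0n | lra].
rewrite key; apply/andP; split; lra.
Qed.

Lemma meas_g : measurable_fun setT g.
Proof. exact: (meas_F model gapf V AM). Qed.

Lemma meas_regret : measurable_fun setT regret.
Proof. by rewrite (funext regret_eq); exact: (meas_F model phif V AM). Qed.

Lemma int_regret (Eg : R) : (\int[P]_w (g w)%:E <= Eg%:E)%E ->
  (\int[P]_w (regret w)%:E <= (L + T%:R * Eg)%:E)%E.
Proof.
move=> Hg.
have H : (\int[P]_w (regret w)%:E <= \int[P]_w (L + T%:R * g w)%:E)%E.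
  apply: ge0_le_integral => //.
  - by move=> w _; rewrite lee_fin; have /andP[] := regret_bnd w.
  - by apply/measurable_EFinP; exact: meas_regret.
  - apply/measurable_EFinP; apply: measurable_funD => //.
    by apply: measurable_funM => //; exact: meas_g.
  - by move=> w _; rewrite lee_fin; have /andP[] := regret_bnd w.
apply: le_trans H _.
under eq_integral => w _ do rewrite EFinD EFinM.
rewrite ge0_integralD //.
all: try (by move=> w _; rewrite lee_fin L0).
all: try (by move=> w _; rewrite -EFinM lee_fin mulr_ge0 // ?ler0n //; have /andP[] := gap_bnd w).
all: try (by apply: emeasurable_funM => //; apply/measurable_EFinP; exact: meas_g).
rewrite integral_cst // ge0_integralZl //.
all: try (by apply/measurable_EFinP; exact: meas_g).
all: try (by move=> w _; rewrite lee_fin; have /andP[] := gap_bnd w).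
all: try (by rewrite lee_fin ler0n).
rewrite [X in (L%:E * X)%E](_ : _ = 1%E); last exact: probability_setT.
rewrite mule1 EFinD; apply: leeD2l; rewrite EFinM; apply: lee_wpmul2l => //; by rewrite lee_fin ler0n.
Qed.

Lemma int_gap_le1 : (\int[P]_w (g w)%:E <= 1%:E)%E.
Proof.
have H : (\int[P]_w (g w)%:E <= \int[P]_w (cst 1%E w))%E.
  apply: ge0_le_integral => //.
  - by move=> w _; rewrite lee_fin; have /andP[] := gap_bnd w.
  - by apply/measurable_EFinP; exact: meas_g.
  - by move=> w _; rewrite lee_fin; have /andP[] := gap_bnd w.
apply: le_trans H _; rewrite integral_cst // mul1e; exact: probability_le1.
Qed.

Lemma int_gap_tail eps : 0 < eps ->
  (forall c, (1 <= c)%N -> (P [set w | (c%:R * eps < g w)%R] <= ((1 / 2) ^+ c / 10)%:E)%E) ->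
  (\int[P]_w (g w)%:E <= (eps * (1 + 1 / 10))%:E)%E.
Proof.
move=> e0 Ht.
have [N HN] : exists N : nat, eps^-1 < N.+1%:R by exists (Num.trunc (eps^-1)); exact: truncnS_gt.
pose E c : set Omega := [set w | (c.+1)%:R * eps < g w].
have mE c : measurable (E c).
  have := meas_g measurableT (measurable_itv `](c.+1%:R * eps), +oo[).
  rewrite setTI; congr measurable; apply/seteqP; split => w /=;
    by rewrite /E /= in_itv /= andbT.
have ptw w : g w <= eps * (1 + \sum_(c < N) \1_(E c) w).
  have := gap_bound (g w) N e0.
  rewrite min_l; last first.
    have /andP[_ g1] := gap_bnd w; apply: (le_trans g1).
    by apply: ltW; rewrite -[X in X < _](mulVf (lt0r_neq0 e0)) ltr_pM2r.
  move=> H; apply: (le_trans H); rewrite ler_pM2l // lerD2l; apply: ler_sum => c _.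
  rewrite indicE; case H2 : ((c.+1)%:R * eps < g w).
    by rewrite mem_set.
  by rewrite ler0n.
pose f2 w := (eps%:E + \sum_(c < N) (eps%:E * (\1_(E c) w)%:E))%E.
have H : (\int[P]_w (g w)%:E <= \int[P]_w f2 w)%E.
  apply: ge0_le_integral => //.
  - by move=> w _; rewrite lee_fin; have /andP[] := gap_bnd w.
  - by apply/measurable_EFinP; exact: meas_g.
  - apply: emeasurable_funD => //; apply: emeasurable_sum => c.
    apply: emeasurable_funM => //; apply/measurable_EFinP; exact: measurable_indic.
  - move=> w _; rewrite /f2.
    under eq_bigr => c _ do rewrite -EFinM.
    by rewrite sumEFin -EFinD lee_fin -mulr_sumr -{1}[eps]mulr1 -mulrDr.
apply: le_trans H _; rewrite /f2 ge0_integralD //.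
all: try (by move=> w _; rewrite lee_fin ltW).
all: try (by move=> w _; apply: sume_ge0 => c _; rewrite -EFinM lee_fin mulr_ge0 // ?ltW).
all: try (by apply: emeasurable_sum => c; apply: emeasurable_funM => //;
            apply/measurable_EFinP; exact: measurable_indic).
rewrite integral_cst // ge0_integral_sum //.
all: try (by move=> c; apply: emeasurable_funM => //; apply/measurable_EFinP; exact: measurable_indic).
all: try (by move=> c w _; rewrite -EFinM lee_fin mulr_ge0 // ?ltW).
rewrite [X in (eps%:E * X)%E](_ : _ = 1%E); last exact: probability_setT.
rewrite mule1.
have H2 : (\sum_(c < N) \int[P]_x (eps%:E * (\1_(E c) x)%:E) <=
          \sum_(c < N) (eps * ((1 / 2) ^+ c.+1 / 10))%:E)%E.
  apply: lee_sum => c _; rewrite ge0_integralZl //.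
  all: try (by apply/measurable_EFinP; exact: measurable_indic).
  all: try (by move=> w _; rewrite lee_fin).
  all: try (by rewrite lee_fin ltW).
  rewrite integral_indic // setIT EFinM; apply: lee_wpmul2l; first by rewrite lee_fin ltW.
  exact: Ht.
apply: le_trans (leeD2l _ H2) _.
rewrite sumEFin -EFinD lee_fin -mulr_sumr mulrDr mulr1 lerD2l ler_pM2l //.
exact: geom_le.
Qed.

End Main.

Local Open Scope classical_set_scope.
Local Open Scope ring_scope.

Definition alg0 (R : realType) : policy R :=
  fun u h => if h is [::] then ARead else AStop 0.

Lemma alg0_result (R : realType) K S u x : (0 < K)%N -> (0 < S)%N ->
  result K S (@alg0 R) u x = Done 0 [:: (ARead, 0)].
Proof.
move=> K0 S0; apply: (@result_Done _ _ _ _ _ _ 2).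
by rewrite /= K0 S0.
Qed.

Lemma alg0_valid (R : realType) K S : (0 < K)%N -> (0 < S)%N ->
  valid_alg K S (@alg0 R) (fun n => n%:R <= (0 : R)).
Proof.
move=> K0 S0 u x _ _; exists 0%N, [:: (ARead, 0)]; split.
  exact: alg0_result.
by [].
Qed.

Lemma alg0_meas (R : realType) d (Omega : measurableType d) K S
    (X : nat -> nat -> Omega -> R) U :
  (0 < K)%N -> (0 < S)%N -> alg_measurable K S (@alg0 R) X U.
Proof.
move=> K0 S0 a s.
have -> : [set w | exists h, run_at K S (@alg0 R) X U w = Done a h /\ pulls h = s]
  = [set w | exists h, Done 0 [:: (ARead, 0 : R)] = Done a h /\ pulls h = s].
  by apply/seteqP; split => w /=; rewrite /run_at alg0_result.
case: (pselect (exists h, Done 0 [:: (ARead, 0 : R)] = Done a h /\ pulls h = s)) => H.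
  by rewrite (_ : [set w | _] = setT) //; apply/seteqP; split.
by rewrite (_ : [set w | _] = set0) //; apply/seteqP; split.
Qed.

Unset Implicit Arguments.

Theorem lemma5p1 (R : realType) :
  exists C : R, 0 < C /\
  forall (K T S : nat) (M : R) (ALG : R -> policy R),
    (0 < K)%N -> (K < T)%N ->
    (forall eps : R, 0 < eps < 1 -> pe_guarantee K S M eps (ALG eps)) ->
    exists ALG' : policy R,
      regret_guarantee K S T
        (C * (M * (T%:R `^ (2 / 3)) / (K%:R `^ (2 / 3))
              + (K%:R `^ (1 / 3)) * (T%:R `^ (2 / 3)))) ALG'.
Proof.
exists 2; split => //.
move=> K T S M ALG K0 KT H.
have T0 : (0 < T)%N by apply: leq_trans K0 (ltnW KT).
set k3 := K%:R `^ (1 / 3) : R; set t3 := T%:R `^ (1 / 3) : R.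
have k30 : 0 < k3 by apply: powR_gt0; rewrite ltr0n.
have t30 : 0 < t3 by apply: powR_gt0; rewrite ltr0n.
have kt : k3 < t3.
  by apply: gt0_ltr_powR => //; rewrite ?nnegrE ?ler0n ?ltr_nat //.
have hK2 : K%:R `^ (2 / 3) = k3 ^+ 2 :> R.
  by rewrite /k3 -powR_mulrn ?powR_ge0 // -powRrM; congr (_ `^ _); field.
have hT2 : T%:R `^ (2 / 3) = t3 ^+ 2 :> R.
  by rewrite /t3 -powR_mulrn ?powR_ge0 // -powRrM; congr (_ `^ _); field.
have hT3 : T%:R = t3 ^+ 3 :> R.
  rewrite /t3 -powR_mulrn ?powR_ge0 // -powRrM (_ : 1 / 3 * 3%:R = 1) ?powRr1 //.
  by field.
rewrite hK2 hT2.
set eps := k3 / t3.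
have e0 : 0 < eps by apply: divr_gt0.
have e1 : eps < 1 by rewrite /eps ltr_pdivrMr // mul1r.
have [Vp Gp] := H eps (introT andP (conj e0 e1)).
set L := M / eps ^+ 2.
have h01 : 0 <= (0 : R) <= 1 by rewrite lexx ler01.
have L0 : 0 <= L.
  have [a [h [_ O]]] := Vp 0 (fun _ _ => 0) h01 (fun _ _ => h01).
  exact: le_trans O.
have BL : L = M * t3 ^+ 2 / k3 ^+ 2.
  by rewrite /L /eps; field; apply/andP; split; apply: lt0r_neq0.
have BT : T%:R * eps = k3 * t3 ^+ 2.
  by rewrite hT3 /eps; field; apply: lt0r_neq0.
have Y0 : 0 <= k3 * t3 ^+ 2 by apply: mulr_ge0; [exact: ltW | exact: exprn_ge0 (ltW t30)].
case: (leP L T%:R) => LT.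
- exists (sim (ALG eps) T); split.
  + move=> u x hu hx; have [a [hf [E O]]] := Vp u x hu hx.
    have nT : (size (pulls hf) <= T)%N by rewrite -(ler_nat R); apply: le_trans O LT.
    have [h' [E' P']] := sim_result E nT.
    by exists a, h'; split => //; rewrite P' size_cat size_nseq subnKC.
  + move=> d Omega P D X U model; have [AM Gt] := Gp d Omega P D X U model; split.
      apply: (sim_measurable model Vp AM) => n O.
      by rewrite -(ler_nat R); apply: le_trans O LT.
    have Ht : forall c, (1 <= c)%N ->
        (P [set w | (c%:R * eps < Fval K S X U (ALG eps) (gapf K D) w)%R]
           <= ((1 / 2) ^+ c / 10)%:E)%E.
      move=> c c1; have := Gt c c1.
      have -> : [set w | exists a h, run_at K S (ALG eps) X U w = Done a h /\
                    mean (D a) < mustar K D - c%:R * eps]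
           = [set w | (c%:R * eps < Fval K S X U (ALG eps) (gapf K D) w)%R] => //.
      apply/seteqP; split => w /=.
      * move=> [a [h [E Hl]]]; rewrite /Fval E /gapf; lra.
      * have [a [h [E _]]] := always_done model Vp w.
        rewrite /Fval E /gapf => Hl; exists a, h; split => //; lra.
    apply: le_trans (int_regret model Vp LT AM (int_gap_tail model Vp AM e0 Ht)) _.
    rewrite lee_fin -BL mulrA BT.
    rewrite -/L; lra.
- have S0 : (0 < S)%N.
    have [a [h [E _]]] := Vp 0 (fun _ _ => 0) h01 (fun _ _ => h01).
    by have [] := result_inv E.
  have V0 := @alg0_valid R K S K0 S0.
  exists (sim (@alg0 R) T); split.
  + move=> u x hu hx; have [a [hf [E O]]] := V0 u x hu hx.
    have nT : (size (pulls hf) <= T)%N by rewrite -(ler_nat R); apply: le_trans O (ler0n _ _).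
    have [h' [E' P']] := sim_result E nT.
    by exists a, h'; split => //; rewrite P' size_cat size_nseq subnKC.
  + move=> d Omega P D X U model.
    have AM := @alg0_meas R d Omega K S X U K0 S0.
    split.
      apply: (sim_measurable model V0 AM) => n O.
      by rewrite -(ler_nat R); apply: le_trans O (ler0n _ _).
    apply: le_trans (int_regret model V0 (ler0n _ _) AM (int_gap_le1 model V0 AM)) _.
    rewrite lee_fin -BL.
    lra.
Qed.
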